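(* Let $X\subset\mathbb{R}^n$ be closed and $\bar x\in X$. If $X$ is nearly radial at $\bar x$, then $X$ is $1$-peaceful at $\bar x$. Conversely, if $X$ is Clarke regular (i.e. $N_X(y)=\hat N_X(y)$) at every point $y\in X$ in a neighbourhood of $\bar x$ and $X$ is $1$-peaceful at $\bar x$, then $X$ is nearly radial at $\bar x$.
   Context: $\mathbb{B}$ is the closed unit ball, $\mathbb{B}_\epsilon(x)$ the closed ball of radius $\epsilon$ about $x$. The (Bouligand) tangent cone is $T_X(x)=\{\lim t_r^{-1}(x_r-x): t_r\downarrow0,\ x_r\to x,\ x_r\in X\}$. $X$ is nearly radial at $\bar x$ if $\operatorname{dist}(\bar x,x+T_X(x))/|x-\bar x|\to0$ as $x\to\bar x$, $x\in X$, $x\neq\bar x$ (equivalently, as stated in the paper, $\operatorname{dist}(\bar x, x+T_X(x))\to 0$ in the scale-invariant sense used there; we use the normalized form). Regular normals: $v\in\hat N_X(y)$ iff $\langle v,x-y\rangle\le o(|x-y|)$ for $x\in X$; normals: $v\in N_X(y)$ iff there are $y^\nu\to y$ in $X$ and $v^\nu\to v$ with $v^\nu\in\hat N_X(y^\nu)$. Pompeiu–Hausdorff distance: $\mathbf d(C,D)=\inf\{\eta\ge0:C\subset D+\eta\mathbb{B},D\subset C+\eta\mathbb{B}\}$. For set-valued $S$ on domain $Y$, $\operatorname{lip}S(\bar y):=\limsup_{y,y'\to\bar y,\,y,y'\in Y,\,y\ne y'}\frac{\mathbf d(S(y'),S(y))}{|y'-y|}$. Let $\Phi_\epsilon:X\rightrightarrows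 X$ and $\tilde\Phi_\epsilon:\mathbb{R}^n\rightrightarrows X$ both be given by $x\mapsto\mathbb{B}_\epsilon(x)\cap X$. $X$ is $1$-peaceful at $\bar x$ if $\operatorname{lip}\Phi_\epsilon(\bar x)<\infty$ for all small $\epsilon>0$ and $\limsup_{\epsilon\downarrow0}\operatorname{lip}\tilde\Phi_\epsilon(\bar x)\le1$. *)

(* Defs.v *)
From mathcomp Require Import all_boot.
From Stdlib Require Import Reals.
Open Scope R_scope.

Definition vec (n : nat) := 'I_n -> R.

Definition vadd {n} (u v : vec n) : vec n := fun i => u i + v i.
Definition vsub {n} (u v : vec n) : vec n := fun i => u i - v i.
Definition vscal {n} (a : R) (u : vec n) : vec n := fun i => a * u i.

Definition dot {n} (u v : vec n) : R := \big[Rplus/R0]_(i < n) (u i * v i).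
Definition vnorm {n} (u : vec n) : R := sqrt (dot u u).

Definition vconv {n} (u : nat -> vec n) (x : vec n) : Prop :=
  forall eps, 0 < eps -> exists N : nat, forall k : nat, (N <= k)%nat ->
    vnorm (vsub (u k) x) < eps.

Definition is_closed {n} (X : vec n -> Prop) : Prop :=
  forall (u : nat -> vec n) (x : vec n),
    (forall k, X (u k)) -> vconv u x -> X x.

Definition ball {n} (x : vec n) (eps : R) : vec n -> Prop :=
  fun z => vnorm (vsub z x) <= eps.

Definition tangent_cone {n} (X : vec n -> Prop) (x : vec n) (v : vec n) : Prop :=
  exists (t : nat -> R) (xs : nat -> vec n),
    (forall r, 0 < t r) /\ Un_cv t 0 /\
    (forall r, X (xs r)) /\ vconv xs x /\
    vconv (fun r => vscal (/ t r) (vsub (xs r) x)) v.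

Definition is_inf (E : R -> Prop) (d : R) : Prop :=
  (forall r, E r -> d <= r) /\
  (forall b, (forall r, E r -> b <= r) -> b <= d).

Definition is_dist {n} (p : vec n) (S : vec n -> Prop) (d : R) : Prop :=
  is_inf (fun r => exists s, S s /\ r = vnorm (vsub p s)) d.

Definition nearly_radial {n} (X : vec n -> Prop) (xbar : vec n) : Prop :=
  forall eps, 0 < eps -> exists delta, 0 < delta /\
    forall x, X x -> x <> xbar -> vnorm (vsub x xbar) < delta ->
      forall d, is_dist xbar (fun z => exists v, tangent_cone X x v /\ z = vadd x v) d ->
        d / vnorm (vsub x xbar) <= eps.

Definition reg_normal {n} (X : vec n -> Prop) (y v : vec n) : Prop :=
  forall eps, 0 < eps -> exists delta, 0 < delta /\
    forall x, X x -> vnorm (vsub x y) < delta ->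
      dot v (vsub x y) <= eps * vnorm (vsub x y).

Definition normal {n} (X : vec n -> Prop) (y v : vec n) : Prop :=
  exists (ys vs : nat -> vec n),
    (forall k, X (ys k)) /\ vconv ys y /\ vconv vs v /\
    (forall k, reg_normal X (ys k) (vs k)).

Definition clarke_regular_near {n} (X : vec n -> Prop) (xbar : vec n) : Prop :=
  exists delta, 0 < delta /\
    forall y, X y -> vnorm (vsub y xbar) < delta ->
      forall v, normal X y v <-> reg_normal X y v.

(* Pompeiu-Hausdorff distance: hausdorff_le C D eta  <->  d(C,D) <= eta
   (d(C,D) = inf of the admissible eta's, an upward closed set, possibly +oo). *)
Definition hausdorff_le {n} (C D : vec n -> Prop) (eta : R) : Prop :=
  forall eta', eta < eta' ->
    (forall c, C c -> exists d, D d /\ vnorm (vsub c d) <= eta') /\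
    (forall d, D d -> exists c, C c /\ vnorm (vsub d c) <= eta').

(* lip_le S Y ybar L  <->  lip S(ybar) <= L, where
   lip S(ybar) = limsup_{y,y' -> ybar, y,y' in Y, y <> y'} d(S y', S y)/|y'-y|. *)
Definition lip_le {n} (S : vec n -> vec n -> Prop) (Y : vec n -> Prop)
    (ybar : vec n) (L : R) : Prop :=
  forall L', L < L' -> exists delta, 0 < delta /\
    forall y y', Y y -> Y y' -> y <> y' ->
      vnorm (vsub y ybar) < delta -> vnorm (vsub y' ybar) < delta ->
      hausdorff_le (S y') (S y) (L' * vnorm (vsub y' y)).

(* Phi_eps (on domain X) and tilde Phi_eps (on domain R^n): x |-> B_eps(x) /\ X. *)
Definition Phi {n} (X : vec n -> Prop) (eps : R) (x : vec n) : vec n -> Prop :=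
  fun z => ball x eps z /\ X z.

Definition one_peaceful {n} (X : vec n -> Prop) (xbar : vec n) : Prop :=
  (exists eps0, 0 < eps0 /\ forall eps, 0 < eps < eps0 ->
     exists L, lip_le (Phi X eps) X xbar L) /\
  (forall L', 1 < L' -> exists eps1, 0 < eps1 /\ forall eps, 0 < eps < eps1 ->
     lip_le (Phi X eps) (fun _ => True) xbar L').

(* Main.v *)
Require Import Defs.
From HB Require Import structures.
From mathcomp Require Import all_boot.
From Stdlib Require Import Reals Lra Lia Psatz Classical ClassicalEpsilon FunctionalExtensionality.
Open Scope R_scope.

HB.instance Definition _ := Monoid.isComLaw.Build R R0 Rplus
  (fun x y z => esym (Rplus_assoc x y z)) Rplus_comm Rplus_0_l.

Ltac vext := apply functional_extensionality; intro; unfold vsub, vadd, vscal; ring.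

Section Vec.
Context {n : nat}.
Implicit Types u v w : vec n.

Lemma dot_comm u v : dot u v = dot v u.
Proof. unfold dot. apply eq_bigr => i _. ring. Qed.

Lemma dot_addl u v w : dot (vadd u v) w = dot u w + dot v w.
Proof. unfold dot, vadd. rewrite -big_split /=. apply eq_bigr => i _. ring. Qed.

Lemma dot_scall a u w : dot (vscal a u) w = a * dot u w.
Proof.
  unfold dot, vscal.
  rewrite (big_morph (fun x => a * x) (id1 := R0) (op1 := Rplus)).
  - apply eq_bigr => i _. ring.
  - move=> x y /=. ring.
  - ring.
Qed.

Lemma dot_subl u v w : dot (vsub u v) w = dot u w - dot v w.
Proof.
  have -> : vsub u v = vadd u (vscal (-1) v) by vext.
  rewrite dot_addl dot_scall. ring.
Qed.

Lemma dot_addr u v w : dot w (vadd u v) = dot w u + dot w v.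
Proof. by rewrite dot_comm dot_addl !(dot_comm w). Qed.
Lemma dot_scalr a u w : dot w (vscal a u) = a * dot w u.
Proof. by rewrite dot_comm dot_scall (dot_comm w). Qed.
Lemma dot_subr u v w : dot w (vsub u v) = dot w u - dot w v.
Proof. by rewrite dot_comm dot_subl !(dot_comm w). Qed.

Lemma sum_le (F G : 'I_n -> R) : (forall i, F i <= G i) ->
  \big[Rplus/R0]_(i<n) F i <= \big[Rplus/R0]_(i<n) G i.
Proof.
  move=> H. apply: (big_ind2 (fun a b => a <= b)); first lra.
  - move=> a b c d; lra.
  - move=> i _; apply H.
Qed.

Lemma sum_nonneg (F : 'I_n -> R) : (forall i, 0 <= F i) -> 0 <= \big[Rplus/R0]_(i<n) F i.
Proof.
  move=> H. apply: (big_ind (fun a => 0 <= a)); first lra.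
  - move=> a b; lra.
  - move=> i _; apply H.
Qed.

Lemma dot_pos u : 0 <= dot u u.
Proof. apply sum_nonneg => i. nra. Qed.

Lemma dot_coord u i : u i * u i <= dot u u.
Proof.
  unfold dot. rewrite (bigD1 i) //=.
  have : 0 <= \big[Rplus/R0]_(j < n | j != i) (u j * u j).
  { apply: (big_ind (fun a => 0 <= a)); first lra. move=> a b; lra. move=> j _; nra. }
  move=> HH. have HH2 := Rplus_le_compat_l (u i * u i) _ _ HH. rewrite Rplus_0_r in HH2. exact HH2.
Qed.

Lemma sum_const_le (F : 'I_n -> R) c : (forall i, F i <= c) -> \big[Rplus/R0]_(i<n) F i <= INR n * c.
Proof.
  move=> H. apply Rle_trans with (\big[Rplus/R0]_(i<n) c). by apply sum_le.
  rewrite big_const_ord. clear H. elim: n => [|m IH]. simpl; lra.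
  rewrite S_INR. change (c + iter m (Rplus c) R0 <= (INR m + 1) * c). lra.
Qed.

Lemma vnorm_pos u : 0 <= vnorm u.
Proof. apply sqrt_pos. Qed.

Lemma vnorm_sq u : vnorm u * vnorm u = dot u u.
Proof. apply sqrt_sqrt, dot_pos. Qed.

Lemma vnorm_le_sq u r : 0 <= r -> dot u u <= r * r -> vnorm u <= r.
Proof.
  move=> Hr H. have := vnorm_pos u. have := vnorm_sq u. move=> E P.
  apply Rnot_lt_le => Hc. nra.
Qed.

Lemma vnorm_lt_sq u r : 0 <= r -> dot u u < r * r -> vnorm u < r.
Proof.
  move=> Hr H. have := vnorm_pos u. have := vnorm_sq u. move=> E P.
  apply Rnot_le_lt => Hc. nra.
Qed.

Lemma sq_le_vnorm u r : 0 <= r -> vnorm u <= r -> dot u u <= r * r.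
Proof. move=> Hr H. rewrite -vnorm_sq. have := vnorm_pos u. nra. Qed.

Lemma coord_le u i : Rabs (u i) <= vnorm u.
Proof.
  rewrite -sqrt_Rsqr_abs. apply sqrt_le_1_alt. apply dot_coord.
Qed.

Lemma dot_zero_l u : (forall i, u i = 0) -> forall v, dot u v = 0.
Proof.
  move=> H v. unfold dot. rewrite big1 // => i _. rewrite H. ring.
Qed.

Lemma cauchy_schwarz u v : dot u v <= vnorm u * vnorm v.
Proof.
  set a := vnorm u. set b := vnorm v.
  have Ha : 0 <= a by apply vnorm_pos.
  have Hb : 0 <= b by apply vnorm_pos.
  have Ea : a * a = dot u u by apply vnorm_sq.
  have Eb : b * b = dot v v by apply vnorm_sq.
  have H := dot_pos (vsub (vscal b u) (vscal a v)).
  rewrite !dot_subl !dot_subr !dot_scall !dot_scalr in H.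
  rewrite (dot_comm v u) -Ea -Eb in H.
  destruct (Rle_lt_or_eq_dec 0 a Ha) as [Pa|Za].
  destruct (Rle_lt_or_eq_dec 0 b Hb) as [Pb|Zb].
  - have : 0 <= (2 * a * b) * (a * b - dot u v) by nra.
    move=> H2. have P : 0 < 2 * a * b by nra.
    have : 0 <= a * b - dot u v. { apply (Rmult_le_reg_l (2*a*b)). lra. lra. }
    lra.
  - rewrite (dot_comm u v) dot_zero_l. rewrite -Zb. lra.
    move=> i. have := dot_coord v i. rewrite -Eb -Zb. nra.
  - rewrite dot_zero_l. rewrite -Za. lra.
    move=> i. have := dot_coord u i. rewrite -Ea -Za. nra.
Qed.

Lemma cs_abs u v : Rabs (dot u v) <= vnorm u * vnorm v.
Proof.
  apply Rabs_le. split; last apply cauchy_schwarz.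
  have := cauchy_schwarz (vscal (-1) u) v. rewrite dot_scall.
  have -> : vnorm (vscal (-1) u) = vnorm u.
  { unfold vnorm. f_equal. rewrite dot_scall dot_scalr. ring. }
  lra.
Qed.

Lemma vnorm_add u v : vnorm (vadd u v) <= vnorm u + vnorm v.
Proof.
  apply vnorm_le_sq. have := vnorm_pos u; have := vnorm_pos v; lra.
  rewrite dot_addl !dot_addr -!vnorm_sq (dot_comm v u).
  have := cauchy_schwarz u v. lra.
Qed.

Lemma vnorm_scal a u : vnorm (vscal a u) = Rabs a * vnorm u.
Proof.
  unfold vnorm. rewrite dot_scall dot_scalr -Rmult_assoc sqrt_mult.
  - f_equal. exact (sqrt_Rsqr_abs a).
  - nra.
  - apply dot_pos.
Qed.

Lemma vnorm_sub_sym u v : vnorm (vsub u v) = vnorm (vsub v u).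
Proof.
  have -> : vsub u v = vscal (-1) (vsub v u) by vext.
  rewrite vnorm_scal Rabs_Ropp Rabs_R1. ring.
Qed.

Lemma vnorm_tri (a b c : vec n) : vnorm (vsub a c) <= vnorm (vsub a b) + vnorm (vsub b c).
Proof.
  have -> : vsub a c = vadd (vsub a b) (vsub b c) by vext.
  apply vnorm_add.
Qed.

Lemma vnorm_rev (a b c : vec n) : vnorm (vsub a c) - vnorm (vsub b c) <= vnorm (vsub a b).
Proof. have := vnorm_tri a b c. lra. Qed.

Lemma dot_sq_sub u v : dot (vsub u v) (vsub u v) = dot u u - 2 * dot u v + dot v v.
Proof. rewrite dot_subl !dot_subr (dot_comm v u). ring. Qed.

Lemma dot_sq_add u v : dot (vadd u v) (vadd u v) = dot u u + 2 * dot u v + dot v v.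
Proof. rewrite dot_addl !dot_addr (dot_comm v u). ring. Qed.

Lemma vnorm_bound_coords u eta : 0 <= eta -> (forall i, Rabs (u i) <= eta) ->
  vnorm u <= (INR n + 1) * eta.
Proof.
  move=> He H. apply vnorm_le_sq.
  have := pos_INR n. nra.
  apply Rle_trans with (INR n * (eta * eta)).
  apply sum_const_le => i. have := H i. have := Rabs_pos (u i).
  move=> P Q. have E : u i * u i = Rabs (u i) * Rabs (u i).
  { rewrite -Rabs_mult Rabs_pos_eq //. nra. }
  rewrite E. nra.
  have := pos_INR n. nra.
Qed.

End Vec.

Lemma small_inv eps : 0 < eps -> exists K : nat, / (INR K + 1) < eps.
Proof.
  move=> He. destruct (archimed_cor1 eps He) as [N [HN HN0]]. exists N.
  have P : 0 < INR N by apply lt_0_INR.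
  apply Rle_lt_trans with (/ INR N); last exact HN.
  apply Rinv_le_contravar; lra.
Qed.

Lemma inv_mono (a b : nat) : Nat.le a b -> / (INR b + 1) <= / (INR a + 1).
Proof.
  move=> H. have := le_INR a b H. have := pos_INR a. move=> P Q.
  apply Rinv_le_contravar; lra.
Qed.

Lemma inv_pos (a : nat) : 0 < / (INR a + 1).
Proof. have := pos_INR a. move=> P. apply Rinv_0_lt_compat. lra. Qed.

Lemma choice_nat {A : Type} (Q : nat -> A -> Prop) : (forall k, exists x, Q k x) ->
  exists f : nat -> A, forall k, Q k (f k).
Proof.
  move=> H. exists (fun k => proj1_sig (constructive_indefinite_description _ (H k))).
  move=> k. exact (proj2_sig (constructive_indefinite_description _ (H k))).
Qed.

Lemma inf_exists (E : R -> Prop) : (exists x, E x) -> (forall x, E x -> 0 <= x) ->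
  exists d, is_inf E d.
Proof.
  move=> [x Hx] Hb.
  have Hbd : bound (fun y => E (- y)). { exists 0 => y Hy. have := Hb _ Hy. lra. }
  have Hne : exists y, (fun y => E (- y)) y. { exists (- x). by rewrite Ropp_involutive. }
  destruct (completeness _ Hbd Hne) as [l [Hl1 Hl2]].
  exists (- l). split.
  - move=> r Hr. have : - r <= l. { apply Hl1. by rewrite Ropp_involutive. } lra.
  - move=> b Hbb. have : l <= - b.
    { apply Hl2 => y Hy. have := Hbb _ Hy. lra. } lra.
Qed.

Lemma abs_bnd x b : Rabs x <= b -> - b <= x <= b.
Proof. move=> H. have H1 := Rle_abs x. have H2 := Rle_abs (- x). rewrite Rabs_Ropp in H2. lra. Qed.

Lemma abs_bnd_lt x b : Rabs x < b -> - b < x < b.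
Proof. move=> H. have H1 := Rle_abs x. have H2 := Rle_abs (- x). rewrite Rabs_Ropp in H2. lra. Qed.

Lemma bw1 (u : nat -> R) M : (forall k, Rabs (u k) <= M) ->
  exists l, forall eps, 0 < eps -> forall N, exists p, Nat.le N p /\ Rabs (u p - l) < eps.
Proof.
  move=> H.
  have HX : forall k, (fun c => -M <= c <= M) (u k).
  { move=> k. have := H k. move/abs_bnd. done. }
  destruct (Bolzano_Weierstrass u _ (compact_P3 (-M) M) HX) as [l Hl].
  exists l => eps He N.
  have Hn : neighbourhood (disc l (mkposreal eps He)) l.
  { exists (mkposreal eps He). by move=> y. }
  destruct (Hl _ N Hn) as [p [Hp Hp2]]. exists p. split; first by [].
  exact Hp2.
Qed.

Section BW.
Context {n : nat}.

Lemma bw_list (u : nat -> vec n) M : (forall k, vnorm (u k) <= M) ->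
  forall l : seq 'I_n, exists x : vec n, forall eps, 0 < eps -> forall N, exists p,
    Nat.le N p /\ forall i, i \in l -> Rabs (u p i - x i) < eps.
Proof.
  move=> HM. elim => [|j l IH].
  - exists (fun _ => 0) => eps He N. exists N. split; first lia. by move=> i.
  - destruct IH as [x Hx].
    have [q Hq] := @choice_nat nat (fun k p => Nat.le k p /\ forall i, i \in l -> Rabs (u p i - x i) < / (INR k + 1))
      (fun k => Hx _ (inv_pos k) k).
    have Hb : forall k, Rabs (u (q k) j) <= M.
    { move=> k. apply Rle_trans with (vnorm (u (q k))). apply coord_le. apply HM. }
    destruct (bw1 _ _ Hb) as [lj Hlj].
    exists (fun i => if i == j then lj else x i) => eps He N.
    destruct (small_inv eps He) as [K HK].
    destruct (Hlj eps He (max N K)) as [p' [Hp' Hp'2]].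
    exists (q p'). have [Hq1 Hq2] := Hq p'.
    split. apply Nat.le_trans with p'; [lia|exact Hq1].
    move=> i. rewrite in_cons. case: eqP => [->|Hne] /=.
    + move=> _. exact Hp'2.
    + move=> Hi.
      apply Rlt_le_trans with (/ (INR p' + 1)). by apply Hq2.
      apply Rle_trans with (/ (INR K + 1)). apply inv_mono; lia. lra.
Qed.

Lemma bwn (u : nat -> vec n) M : (forall k, vnorm (u k) <= M) ->
  exists x : vec n, forall eps, 0 < eps -> forall N, exists p,
    Nat.le N p /\ vnorm (vsub (u p) x) < eps.
Proof.
  move=> HM. destruct (bw_list u M HM (enum 'I_n)) as [x Hx].
  exists x => eps He N.
  have Hn : 0 < INR n + 2 by (have := pos_INR n; lra).
  have He' : 0 < eps / (INR n + 2) by apply Rdiv_lt_0_compat.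
  destruct (Hx _ He' N) as [p [Hp Hp2]]. exists p. split => //.
  apply Rle_lt_trans with ((INR n + 1) * (eps / (INR n + 2))).
  - apply vnorm_bound_coords. lra. move=> i. unfold vsub. apply Rlt_le, Hp2. by rewrite mem_enum.
  - have -> : (INR n + 1) * (eps / (INR n + 2)) = eps * ((INR n + 1) / (INR n + 2)) by (field; lra).
    have : (INR n + 1) / (INR n + 2) < 1.
    { apply (Rmult_lt_reg_r (INR n + 2)). lra. field_simplify; lra. }
    nra.
Qed.

Lemma lim_norm_le (u : nat -> vec n) v L : (forall k, vnorm (u k) <= L) -> vconv u v -> vnorm v <= L.
Proof.
  move=> H Hc. apply le_epsilon => eps He.
  destruct (Hc eps He) as [N HN]. have := HN N (leqnn N). have := H N.
  have := vnorm_tri v (u N) (fun _ => 0).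
  have E1 : forall w : vec n, vsub w (fun _ => 0) = w by move=> w; vext.
  rewrite !E1 vnorm_sub_sym. lra.
Qed.

Lemma lim_dot_le (u : nat -> vec n) v a c : (forall k, dot a (u k) <= c) -> vconv u v -> dot a v <= c.
Proof.
  move=> H Hc. apply le_epsilon => eps He.
  have Ha : 0 < vnorm a + 1 by (have := vnorm_pos a; lra).
  destruct (Hc (eps / (vnorm a + 1))) as [N HN]. by apply Rdiv_lt_0_compat.
  have := HN N (leqnn N). have := H N. have := cauchy_schwarz a (vsub v (u N)).
  rewrite dot_subr vnorm_sub_sym. move=> C1 C2 C3.
  have : vnorm a * vnorm (vsub (u N) v) <= eps.
  { apply Rle_trans with ((vnorm a + 1) * (eps / (vnorm a + 1))).
    have := vnorm_pos (vsub (u N) v). have := vnorm_pos a. nra.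
    right; field; lra. }
  lra.
Qed.

Lemma vconv_h (u : nat -> vec n) x h (K : R) : vconv u x -> 0 <= K ->
  (forall w w', Rabs (h w - h w') <= K * vnorm (vsub w w')) ->
  forall eps, 0 < eps -> exists N, forall k, Nat.le N k -> Rabs (h (u k) - h x) < eps.
Proof.
  move=> Hc HK Hh eps He.
  destruct (Hc (eps / (K + 1))) as [N HN]. apply Rdiv_lt_0_compat; lra.
  exists N => k Hk. have := HN k (introT leP Hk). have := Hh (u k) x.
  have := vnorm_pos (vsub (u k) x). move=> P1 P2 P3.
  apply Rle_lt_trans with (K * vnorm (vsub (u k) x)). done.
  apply Rle_lt_trans with (K * (eps / (K + 1))). nra.
  have -> : K * (eps / (K + 1)) = eps * (K / (K+1)) by (field; lra).
  have : K / (K + 1) < 1. { apply (Rmult_lt_reg_r (K + 1)). lra. field_simplify; lra. }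
  nra.
Qed.

Lemma min_exists (P : vec n -> Prop) (h : vec n -> R) (z : vec n) M K :
  P z -> (forall w, P w -> vnorm (vsub w z) <= M) ->
  (forall (u : nat -> vec n) x, (forall k, P (u k)) -> vconv u x -> P x) ->
  0 <= K -> (forall w w', Rabs (h w - h w') <= K * vnorm (vsub w w')) ->
  (forall w, P w -> 0 <= h w) ->
  exists w, P w /\ forall w', P w' -> h w <= h w'.
Proof.
  move=> Pz HM Hcl HK Hh Hpos.
  destruct (inf_exists (fun r => exists w, P w /\ r = h w)) as [m [Hm1 Hm2]].
  { exists (h z). by exists z. }
  { move=> r [w [Pw ->]]. by apply Hpos. }
  have [a Ha] : exists a : nat -> vec n, forall k, P (a k) /\ h (a k) < m + / (INR k + 1).
  { apply (@choice_nat (vec n) (fun k w => P w /\ h w < m + / (INR k + 1))) => k.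
    apply NNPP => Hn. have : m + / (INR k + 1) <= m.
    { apply Hm2 => r [w [Pw ->]]. apply Rnot_lt_le => Hl. apply Hn. by exists w. }
    have := inv_pos k. lra. }
  have Hab : forall k, vnorm (a k) <= vnorm z + M.
  { move=> k. have [Pk _] := Ha k.
    have T1 := vnorm_tri (a k) z (fun _ => 0).
    have E1 : forall w : vec n, vsub w (fun _ => 0) = w by move=> w; vext.
    rewrite !E1 in T1. have T2 := HM _ Pk. lra. }
  destruct (bwn a _ Hab) as [x Hx].
  have [p Hp] := @choice_nat nat (fun k q => Nat.le k q /\ vnorm (vsub (a q) x) < / (INR k + 1))
     (fun k => Hx _ (inv_pos k) k).
  have Hbc : vconv (fun k => a (p k)) x.
  { move=> eps He. destruct (small_inv eps He) as [K0 HK0]. exists K0 => k /leP Hk.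
    have [_ H2] := Hp k.
    apply Rlt_le_trans with (/ (INR k + 1)). done.
    apply Rle_trans with (/ (INR K0 + 1)). by apply inv_mono. lra. }
  have Px : P x. { apply (Hcl (fun k => a (p k))) => //. move=> k. exact (proj1 (Ha _)). }
  exists x. split => //.
  move=> w' Pw'. apply Rle_trans with m; last by (apply Hm1; exists w').
  apply le_epsilon => eps He.
  have He2 : 0 < eps / 2 by lra.
  destruct (vconv_h _ x h K Hbc HK Hh _ He2) as [N1 HN1].
  destruct (small_inv _ He2) as [K0 HK0].
  have H2 := HN1 (max N1 K0) ltac:(lia).
  have [Hk1 _] := Hp (max N1 K0).
  have [_ Hlt] := Ha (p (max N1 K0)).
  have H1 : / (INR (p (max N1 K0)) + 1) <= / (INR K0 + 1) by apply inv_mono; lia.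
  have H3 := abs_bnd_lt _ _ H2. lra.
Qed.
End BW.

Section T.
Context {n : nat}.

Lemma vnorm_eq0 (u : vec n) : vnorm u = 0 -> u = (fun _ => 0).
Proof.
  move=> H. apply functional_extensionality => i. have H1 := coord_le u i.
  rewrite H in H1. have H2 := Rabs_pos (u i). have H3 : Rabs (u i) = 0 by lra.
  apply NNPP => Hc. exact (Rabs_no_R0 _ Hc H3).
Qed.

Lemma vsub_eq0 (x y : vec n) : vnorm (vsub x y) = 0 -> x = y.
Proof.
  move=> /vnorm_eq0 H. apply functional_extensionality => i.
  have := equal_f H i. unfold vsub. lra.
Qed.

Lemma vnorm_zero : vnorm (fun _ : 'I_n => 0) = 0.
Proof.
  unfold vnorm. rewrite dot_zero_l //. apply sqrt_0.
Qed.

Lemma vsub_self (x : vec n) : vnorm (vsub x x) = 0.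
Proof. have -> : vsub x x = (fun _ => 0) by vext. apply vnorm_zero. Qed.

Lemma tangent_scale (X : vec n -> Prop) x v lam : 0 < lam ->
  tangent_cone X x v -> tangent_cone X x (vscal lam v).
Proof.
  move=> Hl [t [xs [Ht [Hcv [HX [Hxs Hv]]]]]].
  exists (fun r => t r / lam), xs. split; [|split; [|split; [|split]]].
  - move=> r. apply Rdiv_lt_0_compat; [apply Ht|exact Hl].
  - move=> eps He. destruct (Hcv (eps * lam)) as [N HN]. nra.
    exists N => k Hk. have := HN k Hk. unfold R_dist.
    rewrite !Rminus_0_r. move=> H. unfold Rdiv. rewrite Rabs_mult Rabs_inv (Rabs_pos_eq lam); last lra.
    apply (Rmult_lt_reg_r lam) => //. rewrite Rmult_assoc Rinv_l; lra.
  - exact HX.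
  - exact Hxs.
  - move=> eps He. destruct (Hv (eps / lam)) as [N HN]. by apply Rdiv_lt_0_compat.
    exists N => k Hk. have H := HN k Hk.
    have -> : vsub (vscal (/ (t k / lam)) (vsub (xs k) x)) (vscal lam v)
       = vscal lam (vsub (vscal (/ t k) (vsub (xs k) x)) v).
    { have := Ht k. move=> Htk. apply functional_extensionality => i.
      unfold vsub, vscal. field. lra. }
    rewrite vnorm_scal Rabs_pos_eq; last lra.
    apply (Rmult_lt_reg_r (/ lam)). by apply Rinv_0_lt_compat.
    have -> : lam * vnorm (vsub (vscal (/ t k) (vsub (xs k) x)) v) * / lam
        = vnorm (vsub (vscal (/ t k) (vsub (xs k) x)) v) by (field; lra).
    exact H.
Qed.

Lemma tangent_extract (X : vec n -> Prop) (x : vec n) (s : nat -> R) (w : nat -> vec n) L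
  (Q : vec n -> Prop) :
  (forall k, 0 < s k <= / (INR k + 1)) -> (forall k, X (w k)) ->
  (forall k, vnorm (vsub (w k) x) <= L * s k) -> 0 <= L ->
  (forall k, Q (vscal (/ s k) (vsub (w k) x))) ->
  (forall (u : nat -> vec n) v, (forall k, Q (u k)) -> vconv u v -> Q v) ->
  exists v, tangent_cone X x v /\ Q v.
Proof.
  move=> Hs HX Hw HL HQ Hcl.
  set vk := fun k => vscal (/ s k) (vsub (w k) x).
  have Hb : forall k, vnorm (vk k) <= L.
  { move=> k. rewrite /vk vnorm_scal. have [H1 H2] := Hs k.
    rewrite Rabs_pos_eq; last by (apply Rlt_le, Rinv_0_lt_compat).
    apply (Rmult_le_reg_l (s k)) => //. rewrite -Rmult_assoc Rinv_r; last lra.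
    have := Hw k. lra. }
  destruct (bwn vk L Hb) as [v Hv].
  have [p Hp] := @choice_nat nat (fun k q => Nat.le k q /\ vnorm (vsub (vk q) v) < / (INR k + 1))
     (fun k => Hv _ (inv_pos k) k).
  have Evk : forall k, vk k = vscal (/ s k) (vsub (w k) x) by [].
  clearbody vk.
  exists v. split.
  - exists (fun r => s (p r)), (fun r => w (p r)). split; [|split; [|split; [|split]]].
    + move=> r. apply Hs.
    + move=> eps He. destruct (small_inv eps He) as [K HK]. exists K => k Hk.
      unfold R_dist. rewrite Rminus_0_r. have [H1 H2] := Hs (p k). have [H3 _] := Hp k.
      rewrite Rabs_pos_eq; last lra.
      have H4 : / (INR (p k) + 1) <= / (INR K + 1) by apply inv_mono; lia.
      lra.
    + move=> r. apply HX.
    + move=> eps He. have HL1 : 0 < eps / (L + 1) by apply Rdiv_lt_0_compat; lra.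
      destruct (small_inv _ HL1) as [K HK]. exists K => k /leP Hk.
      have [H1 H2] := Hs (p k). have [H3 _] := Hp k.
      have H4 : / (INR (p k) + 1) <= / (INR K + 1) by apply inv_mono; lia.
      have H5 := Hw (p k).
      have H6 : s (p k) < eps / (L + 1) by lra.
      have H7 : (L + 1) * s (p k) < (L + 1) * (eps / (L + 1)) by apply Rmult_lt_compat_l; lra.
      have E : (L + 1) * (eps / (L + 1)) = eps by field; lra.
      rewrite E in H7. nra.
    + move=> eps He. destruct (small_inv eps He) as [K HK]. exists K => k /leP Hk.
      have [H3 H4] := Hp k.
      have H5 : / (INR k + 1) <= / (INR K + 1) by apply inv_mono.
      rewrite Evk in H4. lra.
  - apply (Hcl (fun k => vk (p k))). move=> k. rewrite Evk. apply HQ.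
    move=> eps He. destruct (small_inv eps He) as [K HK]. exists K => k /leP Hk.
    have [H3 H4] := Hp k.
    have H5 : / (INR k + 1) <= / (INR K + 1) by apply inv_mono.
    lra.
Qed.

End T.

Section D.
Context {n : nat}.

Lemma L3_fact e : 0 < e <= 1/2 -> 1 - e * e <= / ((1 + e * e / 2) * (1 + e * e / 2)).
Proof.
  move=> He. set L := (1 + e * e / 2).
  have HL : 1 <= L by (rewrite /L; nra).
  have HL2 : 0 < L * L by nra.
  apply (Rmult_le_reg_l (L * L)) => //. rewrite Rinv_r; last lra.
  rewrite /L. have H2 : 0 <= e * e by nra. have H4 : 0 <= e * e * (e * e) by nra.
  have H6 : 0 <= e * e * (e * e) * (e * e) by nra. nra.
Qed.

Lemma dir2 (X : vec n -> Prop) xbar : one_peaceful X xbar -> nearly_radial X xbar.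
Proof.
  move=> [_ HP] eps He.
  set e := Rmin eps (1/2).
  have He0 : 0 < e by (apply Rmin_glb_lt; lra).
  have He1 : e <= eps by apply Rmin_l.
  have He2 : e <= 1/2 by apply Rmin_r.
  clearbody e.
  have Hee : 0 < e * e by nra.
  destruct (HP (1 + e * e / 4)) as [eps1 [Heps1 Hlip]]. lra.
  exists eps1. split => //.
  move=> x Xx Hne Hlt d Hd.
  remember (vsub x xbar) as a eqn:Ea0. remember (vnorm a) as r eqn:Er.
  have Hr : 0 < r.
  { have H0 := vnorm_pos a. rewrite -Er in H0. destruct (Rle_lt_or_eq_dec 0 r H0) as [H|H] => //.
    exfalso. apply Hne. apply vsub_eq0. by rewrite -Ea0 -Er -H. }
  have Ea : dot a a = r * r by rewrite Er vnorm_sq.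
  destruct (Hlip r (conj Hr Hlt) (1 + e * e / 3)) as [d2 [Hd2 Hh]]. lra.
  set L3 := 1 + e * e / 2.
  have HL3 : 1 <= L3 by (rewrite /L3; lra).
  set c0 := Rmin (d2 / 2) 1.
  have Hc0 : 0 < c0 by (apply Rmin_glb_lt; lra).
  have Hc1 : c0 <= d2 / 2 by apply Rmin_l.
  have Hc2 : c0 <= 1 by apply Rmin_r.
  clearbody c0.
  have [s Es] : exists s : nat -> R, forall k, s k = c0 / (INR k + 1)
    by exists (fun k => c0 / (INR k + 1)).
  have Hs : forall k, 0 < s k <= / (INR k + 1) /\ s k < d2.
  { move=> k. have P := inv_pos k. have P2 := pos_INR k. rewrite Es /Rdiv.
    have P3 : / (INR k + 1) <= 1.
    { rewrite -Rinv_1. apply Rinv_le_contravar; lra. }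
    split; [split|]; nra. }
  set u := vscal (- / r) a.
  have Hu : vnorm u = 1.
  { rewrite /u vnorm_scal Rabs_Ropp Rabs_inv Rabs_pos_eq; [|lra]. rewrite -Er. field. lra. }
  have Hau : dot a u = - r.
  { rewrite /u dot_scalr Ea. field. lra. }
  clearbody u.
  have Hw : forall k, exists w, (ball (vadd xbar (vscal (s k) u)) r w /\ X w) /\
                               vnorm (vsub x w) <= L3 * s k.
  { move=> k. have [[Hs1 Hs2] Hs3] := Hs k.
    have Ny : vnorm (vsub (vadd xbar (vscal (s k) u)) xbar) = s k.
    { have -> : vsub (vadd xbar (vscal (s k) u)) xbar = vscal (s k) u by vext.
      rewrite vnorm_scal Hu Rabs_pos_eq; lra. }
    have Ny' : vnorm (vsub xbar (vadd xbar (vscal (s k) u))) = s k by rewrite vnorm_sub_sym.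
    have Hneq : vadd xbar (vscal (s k) u) <> xbar.
    { move=> E. rewrite E vsub_self in Ny. lra. }
    have := Hh (vadd xbar (vscal (s k) u)) xbar I I Hneq ltac:(lra) ltac:(rewrite vsub_self; lra).
    move=> HH. destruct (HH (L3 * s k)) as [HH1 _].
    { rewrite Ny' /L3. nra. }
    apply (HH1 x). split => //. rewrite /ball -Ea0 -Er. lra. }
  have [w Hwk] := @choice_nat (vec n) (fun k w => (ball (vadd xbar (vscal (s k) u)) r w /\ X w) /\
                               vnorm (vsub x w) <= L3 * s k) Hw.
  have [v [Tv [Qv1 Qv2]]] : exists v, tangent_cone X x v /\ (vnorm v <= L3 /\ dot a v <= - r).
  { apply (tangent_extract X x s w L3 (fun v => vnorm v <= L3 /\ dot a v <= - r)).
  - move=> k. exact (proj1 (Hs k)).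
  - move=> k. exact (proj2 (proj1 (Hwk k))).
  - move=> k. rewrite vnorm_sub_sym. exact (proj2 (Hwk k)).
  - lra.
  - move=> k. have [[Hb _] Hd0] := Hwk k. have [[Hs1 Hs2] _] := Hs k.
    split.
    + rewrite vnorm_scal Rabs_pos_eq; last by (apply Rlt_le, Rinv_0_lt_compat).
      apply (Rmult_le_reg_l (s k)) => //. rewrite -Rmult_assoc Rinv_r; last lra.
      rewrite vnorm_sub_sym. lra.
    + have [vk Evk] : exists vk, vk = vscal (/ s k) (vsub (w k) x) by eexists.
      rewrite -Evk.
      have E : vsub (w k) (vadd xbar (vscal (s k) u)) = vadd a (vscal (s k) (vsub vk u)).
      { rewrite Evk. apply functional_extensionality => i. rewrite /vsub /vadd /vscal.
        rewrite Ea0 /vsub. field. lra. }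
      have H1 := sq_le_vnorm _ _ (Rlt_le _ _ Hr) Hb.
      rewrite /ball E dot_sq_add dot_scalr dot_subr Ea Hau in H1.
      have H2 := dot_pos (vscal (s k) (vsub vk u)).
      have H3 : s k * (dot a vk + r) <= 0 by lra.
      have H4 : dot a vk + r <= 0.
      { apply Rnot_lt_le => Hc. have : 0 < s k * (dot a vk + r) by apply Rmult_lt_0_compat. lra. }
      lra.
  - move=> uu vv Hk Hc. split.
    + apply (lim_norm_le uu) => // k. exact (proj1 (Hk k)).
    + apply (lim_dot_le uu) => // k. exact (proj2 (Hk k)). }
  have [lam Elam] : exists lam, lam = r / (L3 * L3) by eexists.
  have HL3p : 0 < L3 * L3 by nra.
  have Hlam : 0 < lam by (rewrite Elam; apply Rdiv_lt_0_compat).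
  have Tl := tangent_scale X x v lam Hlam Tv.
  have Hd1 : d <= vnorm (vsub xbar (vadd x (vscal lam v))).
  { apply (proj1 Hd). exists (vadd x (vscal lam v)). split => //. by exists (vscal lam v). }
  have Eq : vsub xbar (vadd x (vscal lam v)) = vscal (-1) (vadd a (vscal lam v)).
  { rewrite Ea0. vext. }
  have Hb : vnorm (vsub xbar (vadd x (vscal lam v))) <= e * r.
  { apply vnorm_le_sq. nra.
    rewrite Eq dot_scall dot_scalr dot_sq_add dot_scalr dot_scall Ea.
    have Hv2 := sq_le_vnorm v L3 ltac:(lra) Qv1.
    have HF := L3_fact e ltac:(lra). fold L3 in HF.
    have [I EI] : exists I, I = / (L3 * L3) by eexists.
    rewrite -EI in HF.
    have HI : L3 * L3 * I = 1 by (rewrite EI; field; lra).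
    have Elam2 : lam = r * I by (rewrite Elam EI; field; lra).
    have HIp : 0 < I by (rewrite EI; apply Rinv_0_lt_compat).
    have T1 : lam * (lam * dot v v) <= r * r * I.
    { apply Rle_trans with (lam * lam * (L3 * L3)). nra.
      rewrite Elam2. nra. }
    have T2 : 2 * (lam * dot a v) <= - 2 * (r * r * I).
    { rewrite Elam2. nra. }
    have T3 : r * r * (1 - e * e) <= r * r * I by nra.
    rewrite dot_scalr. nra. }
  have Hde : d <= e * r by lra.
  unfold Rdiv. apply (Rmult_le_reg_r r) => //. rewrite Rmult_assoc Rinv_l; nra.
Qed.
End D.

Section E.
Context {n : nat}.

Lemma descent_step (p v : vec n) c G : 0 < c < 1 -> 0 < G -> 0 < vnorm p -> 0 < vnorm v ->
  dot p v + c * vnorm p * vnorm v <= - G ->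
  exists eta0 t0, 0 < eta0 /\ 0 < t0 /\ forall t (q : vec n), 0 < t < t0 ->
    vnorm (vsub (vscal (/ t) q) v) < eta0 ->
    vnorm (vadd p q) + c * vnorm q <= vnorm p /\ 0 < vnorm q /\ vnorm q <= t * (vnorm v + 1).
Proof.
  move=> Hc HG Hp Hv Hpv.
  have [P EP] : exists P, P = vnorm p by eexists.
  have [V EV] : exists V, V = vnorm v by eexists.
  rewrite -EP -EV in Hpv. rewrite -EV. rewrite -EP in Hp. rewrite -EV in Hv.
  have HP : 0 < P by []. have HV : 0 < V by [].
  exists (Rmin (V / 2) (Rmin 1 (G / (4 * (P + 1))))),
         (Rmin (G / ((V + 1) * (V + 1))) (P / (V + 1))).
  have Hm1 := Rmin_l (V / 2) (Rmin 1 (G / (4 * (P + 1)))).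
  have Hm2 := Rmin_r (V / 2) (Rmin 1 (G / (4 * (P + 1)))).
  have Hm3 := Rmin_l 1 (G / (4 * (P + 1))).
  have Hm4 := Rmin_r 1 (G / (4 * (P + 1))).
  have Ht1 := Rmin_l (G / ((V + 1) * (V + 1))) (P / (V + 1)).
  have Ht2 := Rmin_r (G / ((V + 1) * (V + 1))) (P / (V + 1)).
  move: Hm1 Hm2 Hm3 Hm4 Ht1 Ht2.
  have [eta0 Ee] : exists e, e = Rmin (V / 2) (Rmin 1 (G / (4 * (P + 1)))) by eexists.
  have [t0 Et] : exists e, e = Rmin (G / ((V + 1) * (V + 1))) (P / (V + 1)) by eexists.
  rewrite -Ee -Et. move=> Hm1 Hm2 Hm3 Hm4 Ht1 Ht2.
  have Hg1 : 0 < G / (4 * (P + 1)) by apply Rdiv_lt_0_compat; lra.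
  have Hg2 : 0 < G / ((V + 1) * (V + 1)) by apply Rdiv_lt_0_compat; nra.
  have Hg3 : 0 < P / (V + 1) by apply Rdiv_lt_0_compat; lra.
  have He0 : 0 < eta0 by (rewrite Ee; repeat apply Rmin_glb_lt; lra).
  have Ht0 : 0 < t0 by (rewrite Et; repeat apply Rmin_glb_lt; lra).
  split => //. split => //.
  move=> t q Ht Hq.
  have [eta Eeta] : exists eta : vec n, eta = vsub (vscal (/ t) q) v by eexists.
  rewrite -Eeta in Hq.
  have Eq : q = vscal t (vadd v eta).
  { rewrite Eeta. apply functional_extensionality => i. rewrite /vscal /vadd /vsub. field. lra. }
  have En := vnorm_pos eta.
  have Nq : vnorm q <= t * (V + vnorm eta).
  { rewrite Eq vnorm_scal Rabs_pos_eq; last lra. have HH := vnorm_add v eta. rewrite -EV in HH. nra. }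
  have Nq2 : t * (V - vnorm eta) <= vnorm q.
  { rewrite Eq vnorm_scal Rabs_pos_eq; last lra.
    have HH := vnorm_add (vadd v eta) (vscal (-1) eta).
    have E1 : vadd (vadd v eta) (vscal (-1) eta) = v by vext.
    rewrite E1 vnorm_scal Rabs_Ropp Rabs_R1 -EV in HH. nra. }
  have Hq0 : 0 < vnorm q by nra.
  have HqV : vnorm q <= t * (V + 1) by nra.
  split; last (split; [done|done]).
  have Dpq : dot p q = t * (dot p v + dot p eta) by rewrite Eq dot_scalr dot_addr.
  have CS := cauchy_schwarz p eta. rewrite -EP in CS.
  have Hpq : P - c * vnorm q >= 0.
  { have HH : t * (V + 1) <= P.
    { apply Rle_trans with (t0 * (V + 1)). nra.
      apply Rle_trans with (P / (V + 1) * (V + 1)). nra. right; field; lra. }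
    nra. }
  have Hsq : dot (vadd p q) (vadd p q) <= (P - c * vnorm q) * (P - c * vnorm q).
  { rewrite dot_sq_add -vnorm_sq -EP -(vnorm_sq q) Dpq.
    have [Q EQ] : exists Q, Q = vnorm q by eexists. rewrite -EQ. rewrite -EQ in Nq Nq2 Hq0 HqV Hpq.
    have K1 : t * (dot p v + dot p eta) <= t * (dot p v + P * vnorm eta) by nra.
    have K2 : c * P * Q <= c * P * (t * (V + vnorm eta)).
    { apply Rmult_le_compat_l; [nra|exact Nq]. }
    have K3 : Q * Q <= t * (V + 1) * (t * (V + 1)).
    { have Q0 : 0 <= Q by lra. apply Rmult_le_compat; lra. }
    have K4 : t * (V + 1) * (V + 1) <= G.
    { apply Rle_trans with (t0 * ((V + 1) * (V + 1))). nra.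
      apply Rle_trans with (G / ((V + 1) * (V + 1)) * ((V + 1) * (V + 1))). nra.
      right; field; nra. }
    have K5 : P * vnorm eta * 4 <= G.
    { apply Rle_trans with (P * (G / (4 * (P + 1))) * 4). nra.
      have -> : P * (G / (4 * (P + 1))) * 4 = G * (P / (P + 1)) by (field; lra).
      have HH : P / (P + 1) <= 1. { apply (Rmult_le_reg_r (P + 1)). lra. field_simplify; lra. }
      nra. }
    have K6 : 2 * t * (dot p v + c * P * V) <= - 2 * t * G by nra.
    have Hc2 : 0 <= 1 - c * c by nra.
    have K7 : (1 - c * c) * (Q * Q) <= Q * Q by nra.
    have F3a : t * (t * (V + 1) * (V + 1)) <= t * G by (apply Rmult_le_compat_l; lra).
    have F3 : (1 - c * c) * (Q * Q) <= t * G.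
    { apply Rle_trans with (Q * Q) => //. apply Rle_trans with (t * (V + 1) * (t * (V + 1))) => //.
      have E : t * (V + 1) * (t * (V + 1)) = t * (t * (V + 1) * (V + 1)) by ring.
      rewrite E. exact F3a. }
    have F4a : 0 <= t * P * vnorm eta by (apply Rmult_le_pos; nra).
    have F4b : t * (P * vnorm eta * 4) <= t * G by (apply Rmult_le_compat_l; lra).
    have F4c : c * (t * P * vnorm eta) <= t * P * vnorm eta.
    { rewrite -{2}(Rmult_1_l (t * P * vnorm eta)). apply Rmult_le_compat_r; lra. }
    have E1 : (P - c * Q) * (P - c * Q) = P * P - 2 * (c * P * Q) + (c * c) * (Q * Q) by ring.
    rewrite E1.
    have E2 : t * (dot p v + P * vnorm eta) = t * dot p v + t * P * vnorm eta by ring.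
    have E3 : c * P * (t * (V + vnorm eta)) = c * (t * P * V) + c * (t * P * vnorm eta) by ring.
    have E4 : 2 * t * (dot p v + c * P * V) = 2 * (t * dot p v) + 2 * (c * (t * P * V)) by ring.
    rewrite E2 in K1. rewrite E3 in K2. rewrite E4 in K6.
    have E5 : (1 - c * c) * (Q * Q) = Q * Q - (c * c) * (Q * Q) by ring.
    rewrite E5 in F3.
    have E6 : t * (P * vnorm eta * 4) = 4 * (t * P * vnorm eta) by ring.
    rewrite E6 in F4b.
    have E7 : - 2 * t * G = - 2 * (t * G) by ring. rewrite E7 in K6.
    lra. }
  have HH := vnorm_le_sq (vadd p q) (P - c * vnorm q) ltac:(lra) Hsq. lra.
Qed.
End E.

Lemma Rmax_lip a b e : Rabs (Rmax a e - Rmax b e) <= Rabs (a - b).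
Proof.
  unfold Rmax. destruct (Rle_dec a e); destruct (Rle_dec b e).
  - rewrite Rminus_diag Rabs_R0. apply Rabs_pos.
  - apply Rabs_le. have H1 := Rle_abs (a - b). have H2 := Rle_abs (- (a - b)).
    rewrite Rabs_Ropp in H2. lra.
  - apply Rabs_le. have H1 := Rle_abs (a - b). have H2 := Rle_abs (- (a - b)).
    rewrite Rabs_Ropp in H2. lra.
  - lra.
Qed.

Section F.
Context {n : nat}.

Lemma tangent_zero (X : vec n -> Prop) x : X x -> tangent_cone X x (fun _ => 0).
Proof.
  move=> Xx. exists (fun r => / (INR r + 1)), (fun _ => x).
  split; [|split; [|split; [|split]]].
  - move=> r; apply inv_pos.
  - move=> eps He. destruct (small_inv eps He) as [K HK]. exists K => k Hk.
    unfold R_dist. rewrite Rminus_0_r Rabs_pos_eq; last by (apply Rlt_le, inv_pos).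
    have H := inv_mono K k Hk. lra.
  - by move=> r.
  - move=> eps He. exists 0%nat => k _. rewrite vsub_self. lra.
  - move=> eps He. exists 0%nat => k _.
    have -> : vsub (vscal (/ / (INR k + 1)) (vsub x x)) (fun _ => 0) = (fun _ => 0) by vext.
    rewrite vnorm_zero. lra.
Qed.

Lemma core (X : vec n -> Prop) xbar : is_closed X -> nearly_radial X xbar ->
  forall L, 1 < L -> exists eps1, 0 < eps1 /\ forall eps, 0 < eps < eps1 ->
  exists delta, 0 < delta /\ forall y y' z,
    vnorm (vsub y xbar) < delta -> vnorm (vsub y' xbar) < delta -> X z ->
    vnorm (vsub z y') <= eps ->
    exists w, X w /\ vnorm (vsub w y) <= eps /\ vnorm (vsub z w) <= L * vnorm (vsub y' y).
Proof.
  move=> Hcl NR L HL.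
  have [c Ec] : exists c, c = / L by eexists.
  have Hc : 0 < c < 1.
  { rewrite Ec. split. apply Rinv_0_lt_compat; lra. rewrite -Rinv_1. apply Rinv_lt_contravar; lra. }
  have HLc : L * c = 1 by (rewrite Ec; field; lra).
  have [tau Etau] : exists tau, tau = (1 - c) / 8 by eexists.
  have Htau : 0 < tau by (rewrite Etau; lra).
  destruct (NR tau Htau) as [dnr [Hdnr NRp]].
  exists (dnr / 2). split; first lra.
  move=> eps [He Hedn].
  have [dl Edl] : exists dl, dl = eps * (1 - c) * c / 16 by eexists.
  have Hdl : 0 < dl by (rewrite Edl; apply Rdiv_lt_0_compat; [|lra]; apply Rmult_lt_0_compat; nra).
  have Hdl2 : dl <= eps * (1 - c) / 16 by (rewrite Edl; nra).
  have Hec : eps * (1 - c) <= eps by nra.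
  have Hec0 : 0 <= eps * (1 - c) by nra.
  exists dl. split => //.
  move=> y y' z Hy Hy' Xz Hz.
  destruct (Rle_lt_dec (vnorm (vsub z y)) eps) as [Hc1|Hc2].
  { exists z. split => //. split => //. rewrite vsub_self.
    have H1 := vnorm_pos (vsub y' y). nra. }
  have [gz Egz] : exists gz, gz = vnorm (vsub z y) by eexists.
  rewrite -Egz in Hc2.
  have Hyy : vnorm (vsub y' y) <= 2 * dl.
  { have H1 := vnorm_tri y' xbar y. rewrite (vnorm_sub_sym xbar y) in H1. lra. }
  have Hgz : gz <= eps + vnorm (vsub y' y).
  { have H1 := vnorm_tri z y' y. lra. }
  have Pz : X z /\ Rmax (vnorm (vsub z y)) eps + c * vnorm (vsub z z) <= gz.
  { split => //. rewrite vsub_self Rmax_left; lra. }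
  destruct (min_exists (fun w => X w /\ Rmax (vnorm (vsub w y)) eps + c * vnorm (vsub w z) <= gz)
             (fun w => Rmax (vnorm (vsub w y)) eps) z (gz / c) 1 Pz) as [ws [[Xws Pws] Hmin]].
  - move=> w [_ Hw]. have H1 := Rmax_r (vnorm (vsub w y)) eps.
    apply (Rmult_le_reg_l c). lra. have -> : c * (gz / c) = gz by (field; lra). lra.
  - move=> u x Hu Hux. split.
    + apply (Hcl u) => // k. exact (proj1 (Hu k)).
    + apply le_epsilon => eta Heta.
      destruct (Hux (eta / (1 + c))) as [N HN]. apply Rdiv_lt_0_compat; lra.
      have H1 := HN N (leqnn N). have [_ H2] := Hu N.
      have H3 := Rmax_lip (vnorm (vsub x y)) (vnorm (vsub (u N) y)) eps.
      have H4 := vnorm_rev x (u N) y. have H5 := vnorm_rev (u N) x y.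
      have H7 : Rabs (vnorm (vsub x y) - vnorm (vsub (u N) y)) <= vnorm (vsub (u N) x).
      { apply Rabs_le. rewrite (vnorm_sub_sym x (u N)) in H4. split; lra. }
      have [H6 H6'] := abs_bnd _ _ H3.
      have H8 := vnorm_tri x (u N) z. rewrite (vnorm_sub_sym x (u N)) in H8.
      have H9 : (1 + c) * vnorm (vsub (u N) x) <= eta.
      { apply Rle_trans with ((1 + c) * (eta / (1 + c))). apply Rmult_le_compat_l; lra.
        right; field; lra. }
      nra.
  - lra.
  - move=> w w'. apply Rle_trans with (Rabs (vnorm (vsub w y) - vnorm (vsub w' y))).
    apply Rmax_lip. rewrite Rmult_1_l. apply Rabs_le.
    have H4 := vnorm_rev w w' y. have H5 := vnorm_rev w' w y.
    rewrite (vnorm_sub_sym w' w) in H5. split; lra.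
  - move=> w _. have H1 := Rmax_r (vnorm (vsub w y)) eps. lra.
  -
    have Hhws := Rmax_r (vnorm (vsub ws y)) eps.
    have Hwsz : c * vnorm (vsub ws z) <= vnorm (vsub y' y) by lra.
    have Hgs : vnorm (vsub ws y) <= eps.
    { apply Rnot_lt_le => Hgs.
      have Hhw : Rmax (vnorm (vsub ws y)) eps = vnorm (vsub ws y) by (apply Rmax_left; lra).
      rewrite Hhw in Pws Hmin.
      have [b Eb] : exists b, b = vsub ws xbar by eexists.
      have [nb Enb] : exists nb, nb = vnorm b by eexists.
      have [p Ep] : exists p, p = vsub ws y by eexists.
      have [np Enp] : exists np, np = vnorm p by eexists.
      have [m Em] : exists m, m = vsub xbar y by eexists.
      have Hm : vnorm m < dl by (rewrite Em vnorm_sub_sym; lra).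
      have Epbm : p = vadd b m by (rewrite Ep Eb Em; vext).
      have Hnp : np > eps by (rewrite Enp Ep; lra).
      have Hnp2 : np <= nb + dl.
      { rewrite Enp Epbm. have H1 := vnorm_add b m. rewrite -Enb in H1. lra. }
      have Hnb1 : nb >= np - dl.
      { have H1 := vnorm_add p (vscal (-1) m).
        have E1 : vadd p (vscal (-1) m) = b by (rewrite Epbm; vext).
        rewrite E1 vnorm_scal Rabs_Ropp Rabs_R1 -Enb -Enp in H1. lra. }
      have Hwz : vnorm (vsub ws z) <= eps * (1 - c) / 8.
      { apply (Rmult_le_reg_l c). lra. nra. }
      have Hnb2 : nb < dnr.
      { have H1 := vnorm_tri ws z xbar. have H2 := vnorm_tri z y' xbar.
        rewrite -Eb -Enb in H1. lra. }
      have Hnb0 : 0 < nb by lra.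
      have Hwsx : ws <> xbar.
      { move=> E. rewrite Enb Eb E vsub_self in Hnb0. lra. }
      destruct (inf_exists (fun r => exists s, (exists v, tangent_cone X ws v /\ s = vadd ws v) /\
                                      r = vnorm (vsub xbar s))) as [d Hd].
      { exists (vnorm (vsub xbar (vadd ws (fun _ => 0)))). exists (vadd ws (fun _ => 0)).
        split => //. exists (fun _ => 0). split => //. by apply tangent_zero. }
      { move=> r [s0 [_ ->]]. apply vnorm_pos. }
      have Hnr := NRp ws Xws Hwsx ltac:(rewrite -Eb -Enb; lra) d Hd.
      rewrite -Eb -Enb in Hnr.
      have Hdt : d <= tau * nb.
      { apply (Rmult_le_reg_r (/ nb)). by apply Rinv_0_lt_compat.
        have -> : tau * nb * / nb = tau by (field; lra). exact Hnr. }
      have [v [Tv Hv]] : exists v, tangent_cone X ws v /\ vnorm (vsub xbar (vadd ws v)) < 2 * tau * nb.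
      { apply NNPP => Hn. have Hlow : 2 * tau * nb <= d.
        { apply (proj2 Hd) => r [s0 [[v [Tv ->]] ->]]. apply Rnot_lt_le => Hl. apply Hn.
          exists v. by split. }
        nra. }
      have [e' Ee'] : exists e', e' = vadd v b by eexists.
      have He' : vnorm e' < 2 * tau * nb.
      { have E1 : vsub xbar (vadd ws v) = vscal (-1) e' by (rewrite Ee' Eb; vext).
        rewrite E1 vnorm_scal Rabs_Ropp Rabs_R1 Rmult_1_l in Hv. exact Hv. }
      have Ev : v = vsub e' b by (rewrite Ee'; vext).
      have He'0 := vnorm_pos e'.
      have T1 : dot p v = dot p e' - dot p b by rewrite Ev dot_subr.
      have T2 : dot p b >= nb * nb - dl * nb.
      { rewrite Epbm dot_addl -vnorm_sq -Enb.
        have H1 := cs_abs m b. rewrite -Enb in H1. have [H2 _] := abs_bnd _ _ H1.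
        have H3 := vnorm_pos m. nra. }
      have T3 : dot p e' <= (nb + dl) * (2 * tau * nb).
      { have H1 := cauchy_schwarz p e'. rewrite -Enp in H1.
        apply Rle_trans with (np * vnorm e') => //. apply Rmult_le_compat; try lra. }
      have T4 : vnorm v <= (1 + 2 * tau) * nb.
      { rewrite Ev. have H1 := vnorm_add e' (vscal (-1) b).
        have E1 : vadd e' (vscal (-1) b) = vsub e' b by vext.
        rewrite E1 vnorm_scal Rabs_Ropp Rabs_R1 -Enb in H1. lra. }
      have T4' : (1 - 2 * tau) * nb < vnorm v.
      { have H1 := vnorm_add v (vscal (-1) e').
        have E1 : vadd v (vscal (-1) e') = vscal (-1) b by (rewrite Ev; vext).
        rewrite E1 !vnorm_scal Rabs_Ropp Rabs_R1 -Enb in H1. lra. }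
      have Hv0 : 0 < vnorm v by (rewrite Etau in T4'; nra).
      have T5 : c * np * vnorm v <= c * (nb + dl) * ((1 + 2 * tau) * nb).
      { rewrite Rmult_assoc Rmult_assoc. apply Rmult_le_compat_l. lra.
        apply Rmult_le_compat; try lra. }
      have [A EA] : exists A, A = 2 * tau + c * (1 + 2 * tau) by eexists.
      have HA1 : A <= 1 - (1 - c) / 2 by (rewrite EA Etau; nra).
      have HA2 : 0 <= A <= 2 by (rewrite EA Etau; split; nra).
      have Sum : dot p v + c * np * vnorm v <= nb * ((nb + dl) * A - nb + dl).
      { have E1 : nb * ((nb + dl) * A - nb + dl) =
           (nb + dl) * (2 * tau * nb) - (nb * nb - dl * nb) + c * (nb + dl) * ((1 + 2 * tau) * nb)
          by (rewrite EA; ring).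
        rewrite E1. lra. }
      have Br : (nb + dl) * A - nb + dl <= - ((1 - c) / 16 * eps).
      { have B1 : (nb + dl) * A <= (nb + dl) * (1 - (1 - c) / 2) by (apply Rmult_le_compat_l; lra).
        have B2 : (nb + dl) * (1 - (1 - c) / 2) - nb + dl = - nb * ((1 - c) / 2) + dl * (2 - (1 - c) / 2)
          by ring.
        have B3 : (eps - 2 * dl) * ((1 - c) / 2) <= nb * ((1 - c) / 2) by (apply Rmult_le_compat_r; lra).
        have B4 : dl * (2 - (1 - c) / 2) <= 2 * dl by nra.
        nra. }
      have [G EG] : exists G, G = (1 - c) / 16 * eps * nb by eexists.
      have HG : 0 < G by (rewrite EG; apply Rmult_lt_0_compat; [|lra]; nra).
      have Hpv : dot p v + c * np * vnorm v <= - G.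
      { apply Rle_trans with (nb * ((nb + dl) * A - nb + dl)) => //.
        rewrite EG. have E1 : - ((1 - c) / 16 * eps * nb) = nb * (- ((1 - c) / 16 * eps)) by ring.
        rewrite E1. apply Rmult_le_compat_l; lra. }
      have Hnp0 : 0 < vnorm p by (rewrite -Enp; lra).
      destruct (descent_step p v c G Hc HG Hnp0 Hv0 ltac:(rewrite -Enp; lra)) as [eta0 [t0 [He0 [Ht0 Hstep]]]].
      destruct Tv as [t [xs [Ht [Hcv [HX [Hxs Hvv]]]]]].
      have Hgap : 0 < (np - eps) / (vnorm v + 1) by (apply Rdiv_lt_0_compat; lra).
      destruct (Hcv (Rmin t0 ((np - eps) / (vnorm v + 1)))) as [N1 HN1].
      { apply Rmin_glb_lt; lra. }
      destruct (Hvv eta0 He0) as [N2 HN2].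
      have Hr1 := HN1 (max N1 N2) ltac:(lia).
      have Hr2 := HN2 (max N1 N2) (introT leP (Nat.le_max_r N1 N2)).
      move: Hr1 Hr2. set r := max N1 N2. move=> Hr1 Hr2.
      unfold R_dist in Hr1. rewrite Rminus_0_r Rabs_pos_eq in Hr1; last by (apply Rlt_le, Ht).
      have Hm1 := Rmin_l t0 ((np - eps) / (vnorm v + 1)).
      have Hm2 := Rmin_r t0 ((np - eps) / (vnorm v + 1)).
      have Htr := Ht r.
      destruct (Hstep (t r) (vsub (xs r) ws) ltac:(split; lra) Hr2) as [Hd1 [Hd2 Hd3]].
      have E1 : vadd p (vsub (xs r) ws) = vsub (xs r) y by (rewrite Ep; vext).
      rewrite E1 -Enp in Hd1.
      have Hq : vnorm (vsub (xs r) ws) < np - eps.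
      { apply Rle_lt_trans with (t r * (vnorm v + 1)) => //.
        apply Rlt_le_trans with ((np - eps) / (vnorm v + 1) * (vnorm v + 1)).
        apply Rmult_lt_compat_r. have := vnorm_pos v. lra. lra.
        right; field. have := vnorm_pos v. lra. }
      have Hcq : c * vnorm (vsub (xs r) ws) <= vnorm (vsub (xs r) ws).
      { rewrite -{2}(Rmult_1_l (vnorm (vsub (xs r) ws))). apply Rmult_le_compat_r; [apply vnorm_pos|lra]. }
      have Hmx : Rmax (vnorm (vsub (xs r) y)) eps <= np - c * vnorm (vsub (xs r) ws).
      { apply Rmax_lub; lra. }
      have Hxz := vnorm_tri (xs r) ws z.
      have Hpp : Rmax (vnorm (vsub (xs r) y)) eps + c * vnorm (vsub (xs r) z) <= gz.
      { rewrite Enp Ep in Hmx. nra. }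
      have Hmn := Hmin (xs r) (conj (HX r) Hpp).
      rewrite Enp Ep in Hmx. nra. }
    exists ws. split => //. split => //.
    rewrite vnorm_sub_sym.
    apply (Rmult_le_reg_l c). lra.
    have -> : c * (L * vnorm (vsub y' y)) = vnorm (vsub y' y) by (rewrite -Rmult_assoc (Rmult_comm c L) HLc; ring).
    exact Hwsz.
Qed.
End F.

Section G.
Context {n : nat}.

Lemma lip_from_core (X : vec n -> Prop) xbar L eps delta (Y : vec n -> Prop) :
  0 < delta -> 0 <= L ->
  (forall y y' z, vnorm (vsub y xbar) < delta -> vnorm (vsub y' xbar) < delta -> X z ->
    vnorm (vsub z y') <= eps ->
    exists w, X w /\ vnorm (vsub w y) <= eps /\ vnorm (vsub z w) <= L * vnorm (vsub y' y)) ->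
  lip_le (Phi X eps) Y xbar L.
Proof.
  move=> Hd HL H L'' HL''. exists delta. split => //.
  move=> y y' _ _ _ Hy Hy' eta Heta.
  have Hn := vnorm_pos (vsub y' y).
  have HLe : L * vnorm (vsub y' y) <= eta by nra.
  split.
  - move=> c [Hc Xc]. destruct (H y y' c Hy Hy' Xc Hc) as [w [Xw [Hw1 Hw2]]].
    exists w. split. by split. lra.
  - move=> d [Hd' Xd]. destruct (H y' y d Hy' Hy Xd Hd') as [w [Xw [Hw1 Hw2]]].
    exists w. split. rewrite /Phi /ball; split; assumption. rewrite (vnorm_sub_sym y y') in Hw2. lra.
Qed.

Lemma dir1 (X : vec n -> Prop) xbar : is_closed X -> nearly_radial X xbar -> one_peaceful X xbar.
Proof.
  move=> Hcl NR. split.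
  - destruct (core X xbar Hcl NR 2 ltac:(lra)) as [eps1 [He1 Hc]].
    exists eps1. split => // eps Heps. exists 2.
    destruct (Hc eps Heps) as [delta [Hd Hcore]].
    apply (lip_from_core X xbar 2 eps delta) => //. lra.
  - move=> L' HL'. destruct (core X xbar Hcl NR L' HL') as [eps1 [He1 Hc]].
    exists eps1. split => // eps Heps.
    destruct (Hc eps Heps) as [delta [Hd Hcore]].
    apply (lip_from_core X xbar L' eps delta) => //. lra.
Qed.

End G.

Theorem theorem7p3 (n : nat) (X : vec n -> Prop) (xbar : vec n) :
  is_closed X -> X xbar ->
  (nearly_radial X xbar -> one_peaceful X xbar) /\
  (clarke_regular_near X xbar -> one_peaceful X xbar -> nearly_radial X xbar).
Proof.
  move=> Hcl _. split.
  - by apply dir1.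
  - move=> _. apply dir2.
Qed.
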